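(* Let $\mathbb{H}$ be a finite-dimensional complex Hilbert space with $\dim\mathbb{H}\ge2$, let $k,n$ be positive integers, let $\alpha,\beta$ be complex numbers with $|\alpha|^2+|\beta|^2=1$ and $|\beta|\ne1$, and let $|\phi\rangle\in\mathbb{H}$ be a fixed unit vector (independent of the input; known or unknown). For a pure state $\rho_\psi$ on $\mathbb{H}$ let $|\varphi\rangle\propto\alpha|\psi\rangle+\beta|\phi\rangle$. Then: (i) if $0<|\beta|<1$, there is no probabilistic quantum transformation $\mathcal{F}$ from $\mathbb{H}^{\otimes k}$ to $\mathbb{H}^{\otimes n}$ with $\mathcal{F}(\rho_\psi^{\otimes k})=\rho_\varphi^{\otimes n}$ for all pure states $\rho_\psi$ on $\mathbb{H}$; (ii) if $\beta=0$ and $n>k$, there is no probabilistic quantum transformation $\mathcal{F}$ from $\mathbb{H}^{\otimes k}$ to $\mathbb{H}^{\otimes n}$ with $\mathcal{F}(\rho_\psi^{\otimes k})=\rho_\psi^{\otimes n}$ for all pure states $\rho_\psi$; (iii) if $\beta=0$ and $n<k$, there is no unitary $U$ on $\mathbb{H}^{\otimes k}$ with $U\rho_\psi^{\otimes k}U^\dagger=\rho_\psi^{\otimes n}\otimes\rho_0^{\otimes(k-n)}$ for all pure states $\rho_\psi$, where $|0\rangle\in\mathbb{H}$ is a fixed unit vector.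
   Context: For a unit vector $|\psi\rangle$, $\rho_\psi=|\psi\rangle\langle\psi|$; $|\varphi\rangle\propto|\chi\rangle$ means $|\varphi\rangle$ is the normalization of $|\chi\rangle$ up to a global phase. A probabilistic quantum transformation from $\mathbb{H}_1$ to $\mathbb{H}_2$ is a completely positive, trace-non-increasing linear map from operators on $\mathbb{H}_1$ to operators on $\mathbb{H}_2$; $\mathcal{F}(\rho)=\sigma$ for pure states means $\mathcal{F}(\rho)=p\sigma$ for some $p>0$. *)

(* Defs.v *)
From HB Require Import structures.
From mathcomp Require Import all_boot all_order all_algebra.
From mathcomp Require Export sesquilinear spectral.
Set Implicit Arguments. Unset Strict Implicit. Unset Printing Implicit Defensive.
Import Order.TTheory GRing.Theory Num.Theory.
Local Open Scope ring_scope.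

Section QDefs.
Variable C : numClosedFieldType.

Definition adjmx m n (A : 'M[C]_(m, n)) : 'M[C]_(n, m) := ((map_mx Num.conj A)^T)%R.

Definition sqnorm n (v : 'cV[C]_n) : C := (adjmx v *m v) 0 0.

Definition unit_vec n (v : 'cV[C]_n) : Prop := sqnorm v = 1.

(* normalization of a vector (the global phase is irrelevant for rho) *)
Definition normalize n (v : 'cV[C]_n) : 'cV[C]_n := (sqrtC (sqnorm v))^-1 *: v.

Definition proj n (v : 'cV[C]_n) : 'M[C]_n := v *m adjmx v.

Definition split_idx m n (i : 'I_(m * n)) : 'I_m * 'I_n :=
  enum_val (cast_ord (esym (mxvec_cast m n)) i).

Definition kron m1 n1 m2 n2 (A : 'M[C]_(m1, n1)) (B : 'M[C]_(m2, n2))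
  : 'M[C]_(m1 * m2, n1 * n2) :=
  \matrix_(i, j) (A (split_idx i).1 (split_idx j).1 * B (split_idx i).2 (split_idx j).2).

Fixpoint tpow d (A : 'M[C]_d) (k : nat) : 'M[C]_(d ^ k) :=
  match k return 'M[C]_(d ^ k) with
  | 0 => 1%:M
  | k'.+1 => castmx (esym (expnS d k'), esym (expnS d k')) (kron A (tpow A k'))
  end.

Definition psd m (A : 'M[C]_m) : Prop :=
  forall v : 'cV[C]_m, 0 <= (adjmx v *m A *m v) 0 0.

(* (id_p (x) F) acting on 'M_(p*m) *)
Definition ampl p m n (F : 'M[C]_m -> 'M[C]_n) (X : 'M[C]_(p * m)) : 'M[C]_(p * n) :=
  \matrix_(i, j)
    (F (\matrix_(x, y) X (mxvec_index (split_idx i).1 x) (mxvec_index (split_idx j).1 y)))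
      (split_idx i).2 (split_idx j).2.

Definition completely_positive m n (F : 'M[C]_m -> 'M[C]_n) : Prop :=
  forall (p : nat) (X : 'M[C]_(p * m)), psd X -> psd (ampl F X).

Definition trace_nonincreasing m n (F : 'M[C]_m -> 'M[C]_n) : Prop :=
  forall X : 'M[C]_m, psd X -> \tr (F X) <= \tr X.

Definition prob_qtrans m n (F : {linear 'M[C]_m -> 'M[C]_n}) : Prop :=
  completely_positive F /\ trace_nonincreasing F.

End QDefs.

Lemma expn_split (d n k : nat) : (n < k)%N -> (d ^ n * d ^ (k - n))%N = (d ^ k)%N.
Proof. by move=> h; rewrite -expnD subnKC // ltnW. Qed.

(* Main.v *)
Require Import Defs.
From HB Require Import structures.
From mathcomp Require Import all_boot all_order all_algebra sesquilinear spectral.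
From mathcomp Require Import ring zify.
Import Order.TTheory GRing.Theory Num.Theory.
Local Open Scope ring_scope.


Definition dot {C : numClosedFieldType} {n} (a b : 'cV[C]_n) : C := (adjmx a *m b) 0 0.

Lemma dotE {C : numClosedFieldType} n (a b : 'cV[C]_n) :
  dot a b = \sum_i (a i 0)^* * b i 0.
Proof. by rewrite /dot !mxE; apply: eq_bigr => i _; rewrite !mxE. Qed.

Lemma projE {C : numClosedFieldType} n (v : 'cV[C]_n) i j :
  proj v i j = v i 0 * (v j 0)^*.
Proof. by rewrite /proj !mxE big_ord1 !mxE. Qed.

Lemma split_mxvec m n (i : 'I_m) (j : 'I_n) : split_idx (mxvec_index i j) = (i, j).
Proof. by rewrite /split_idx /mxvec_index cast_ordK enum_rankK. Qed.

Lemma sum_split {C : numClosedFieldType} {m n} (F : 'I_m -> 'I_n -> C) :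
  \sum_(l < m * n) F (split_idx l).1 (split_idx l).2 = \sum_i \sum_j F i j.
Proof.
rewrite pair_bigA /=.
rewrite (reindex (fun p : 'I_m * 'I_n => mxvec_index p.1 p.2)) /=.
  by apply: eq_bigr => -[i j] _; rewrite split_mxvec.
exists (fun l => split_idx l) => [[i j] _ | l _] /=; first by rewrite split_mxvec.
by case/mxvec_indexP: l => i j; rewrite split_mxvec.
Qed.

Fixpoint vpow {C : numClosedFieldType} {d} (v : 'cV[C]_d) (k : nat) : 'cV[C]_(d ^ k) :=
  match k return 'cV[C]_(d ^ k) with
  | 0 => const_mx 1
  | k'.+1 => castmx (esym (expnS d k'), erefl 1) (kron v (vpow v k'))
  end.

Lemma kron_col {C : numClosedFieldType} m n (a : 'cV[C]_m) (b : 'cV[C]_n) i j :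
  kron a b i j = a (split_idx i).1 0 * b (split_idx i).2 0.
Proof. by rewrite mxE (ord1 (split_idx j).1) (ord1 (split_idx j).2). Qed.

Lemma kron_proj {C : numClosedFieldType} m n (a : 'cV[C]_m) (b : 'cV[C]_n) :
  kron (proj a) (proj b) = proj (kron a b).
Proof.
apply/matrixP => i j; rewrite projE !kron_col mxE !projE rmorphM /=.
by rewrite mulrACA.
Qed.

Lemma proj_cast {C : numClosedFieldType} m m' (e : m = m') (v : 'cV[C]_m) :
  proj (castmx (e, erefl 1) v) = castmx (e, e) (proj v).
Proof. by case: m' / e; rewrite !castmx_id. Qed.

Lemma tpow_proj {C : numClosedFieldType} d (v : 'cV[C]_d) k :
  tpow (proj v) k = proj (vpow v k).
Proof.
elim: k => [|k IH] /=.
  apply/matrixP => i j; rewrite projE !mxE !(ord1 i) !(ord1 j) /=.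
  by rewrite conjC1 mulr1.
by rewrite IH kron_proj proj_cast.
Qed.

Lemma dot_kron {C : numClosedFieldType} m n (a c : 'cV[C]_m) (b e : 'cV[C]_n) :
  dot (kron a b) (kron c e) = dot a c * dot b e.
Proof.
rewrite !dotE big_distrl /=.
under eq_bigr => l _ do rewrite !kron_col rmorphM /= mulrACA.
rewrite (sum_split (fun i j => (a i 0)^* * c i 0 * ((b j 0)^* * e j 0))).
by apply: eq_bigr => i _; rewrite big_distrr.
Qed.

Lemma dot_cast {C : numClosedFieldType} m m' (e : m = m') (a b : 'cV[C]_m) :
  dot (castmx (e, erefl 1) a) (castmx (e, erefl 1) b) = dot a b.
Proof. by case: m' / e; rewrite !castmx_id. Qed.

Lemma dot_vpow {C : numClosedFieldType} d (a b : 'cV[C]_d) k :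
  dot (vpow a k) (vpow b k) = dot a b ^+ k.
Proof.
elim: k => [|k IH] /=.
  by rewrite dotE big_ord1 !mxE rmorph1 mulr1.
by rewrite dot_cast dot_kron IH exprS.
Qed.

Lemma tr1 {C : numClosedFieldType} (B : 'M[C]_1) : \tr B = B 0 0.
Proof. by rewrite /mxtrace big_ord1. Qed.

Lemma tr_proj {C : numClosedFieldType} n (x y : 'cV[C]_n) :
  \tr (proj x *m proj y) = dot x y * dot y x.
Proof.
rewrite /proj -!mulmxA mxtrace_mulC tr1 !mulmxA -(mulmxA (adjmx x *m y)).
by rewrite mxE big_ord1.
Qed.



Lemma dotDl {C : numClosedFieldType} n (a b c : 'cV[C]_n) : dot (a + b) c = dot a c + dot b c.
Proof. by rewrite !dotE -big_split; apply: eq_bigr => i _; rewrite mxE rmorphD mulrDl. Qed.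
Lemma dotDr {C : numClosedFieldType} n (a b c : 'cV[C]_n) : dot c (a + b) = dot c a + dot c b.
Proof. by rewrite !dotE -big_split; apply: eq_bigr => i _; rewrite mxE mulrDr. Qed.
Lemma dotZl {C : numClosedFieldType} n (s : C) (a c : 'cV[C]_n) : dot (s *: a) c = s^* * dot a c.
Proof. by rewrite !dotE mulr_sumr; apply: eq_bigr => i _; rewrite mxE rmorphM mulrA. Qed.
Lemma dotZr {C : numClosedFieldType} n (s : C) (a c : 'cV[C]_n) : dot c (s *: a) = s * dot c a.
Proof. by rewrite !dotE mulr_sumr; apply: eq_bigr => i _; rewrite mxE mulrCA. Qed.
Lemma dotC {C : numClosedFieldType} n (a b : 'cV[C]_n) : dot b a = (dot a b)^*.
Proof.
rewrite !dotE.
rewrite (big_morph _ (rmorphD Num.conj) (rmorph0 Num.conj)); apply: eq_bigr => i _; rewrite rmorphM mulrC; congr (_ * _); symmetry; apply: conjCK. Qed.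

Lemma sqnorm_dot {C : numClosedFieldType} n (v : 'cV[C]_n) : sqnorm v = dot v v.
Proof. by []. Qed.

Lemma sqnorm_ge0 {C : numClosedFieldType} n (v : 'cV[C]_n) : 0 <= sqnorm v.
Proof. rewrite sqnorm_dot dotE; apply: sumr_ge0 => i _; rewrite mulrC; exact: mul_conjC_ge0. Qed.

Lemma sqnorm_eq0 {C : numClosedFieldType} n (v : 'cV[C]_n) : sqnorm v = 0 -> v = 0.
Proof.
rewrite sqnorm_dot dotE => /psumr_eq0P H.
apply/matrixP => i j; rewrite (ord1 j) mxE.
have /eqP := H (fun i0 _ => ltac:(by rewrite mulrC mul_conjC_ge0)) i isT.
by rewrite mulrC mul_conjC_eq0 => /eqP.
Qed.

Lemma proj_scale {C : numClosedFieldType} n (c : C) (v : 'cV[C]_n) :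
  proj (c *: v) = (c * c^*) *: proj v.
Proof. by apply/matrixP => i j; rewrite [LHS]projE [RHS]mxE projE !mxE rmorphM mulrACA. Qed.

Lemma projN {C : numClosedFieldType} n (v : 'cV[C]_n) : proj (- v) = proj v.
Proof. by apply/matrixP => i j; rewrite !projE !mxE rmorphN mulrNN. Qed.

Lemma castmxZ {C : numClosedFieldType} m n m' n' (e : (m = m') * (n = n')) (c : C) (A : 'M[C]_(m, n)) :
  castmx e (c *: A) = c *: castmx e A.
Proof. by case: e => e1 e2; case: m' / e1; case: n' / e2; rewrite !castmx_id. Qed.

Lemma tpow_scale {C : numClosedFieldType} d (c : C) (A : 'M[C]_d) k :
  tpow (c *: A) k = c ^+ k *: tpow A k.
Proof.
elim: k => [|k IH] /=; first by rewrite scale1r.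
rewrite IH -castmxZ; congr castmx; apply/matrixP => i j.
by rewrite !mxE exprS mulrACA.
Qed.

Lemma normalize_unit {C : numClosedFieldType} n (v : 'cV[C]_n) :
  sqnorm v != 0 -> unit_vec (normalize v).
Proof.
move=> nz; rewrite /unit_vec /normalize sqnorm_dot dotZl dotZr -sqnorm_dot.
set s := sqnorm v.
have s0 : 0 <= s by exact: sqnorm_ge0.
rewrite geC0_conj ?invr_ge0 ?sqrtC_ge0 //.
by rewrite mulrA -expr2 exprVn sqrtCK mulVf.
Qed.

Lemma normalize_id {C : numClosedFieldType} n (v : 'cV[C]_n) :
  sqnorm v = 1 -> normalize v = v.
Proof. by move=> h; rewrite /normalize h sqrtC1 invr1 scale1r. Qed.

Lemma kernel_exists {C : numClosedFieldType} m r (A : 'M[C]_(m, r)) :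
  (r < m)%N -> exists2 u : 'rV[C]_m, u != 0 & u *m A = 0.
Proof.
move=> rm.
have rk : (0 < \rank (kermx A))%N.
  rewrite mxrank_ker subn_gt0; apply: leq_ltn_trans rm; exact: rank_leq_col.
case: (pickP (fun i => row i (kermx A) != 0)) => [i Hi | H].
  exists (row i (kermx A)) => //; apply/sub_kermxP; exact: row_sub.
suff : kermx A = 0 by move=> E; move: rk; rewrite E mxrank0.
apply/row_matrixP => i; rewrite row0; move: (H i) => /= /negbFE /eqP //.
Qed.



Lemma adjmx_mul {C : numClosedFieldType} m n p (A : 'M[C]_(m, n)) (B : 'M[C]_(n, p)) :
  adjmx (A *m B) = adjmx B *m adjmx A.
Proof. by rewrite /adjmx map_mxM trmx_mul. Qed.

Lemma unitary_adj {C : numClosedFieldType} n (U : 'M[C]_n) :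
  U \is unitarymx -> adjmx U *m U = 1%:M.
Proof.
move/unitarymxP => h; apply: mulmx1C; rewrite -h /adjmx.
by rewrite map_trmx.
Qed.

Lemma dot_unitary {C : numClosedFieldType} n (U : 'M[C]_n) (a b : 'cV[C]_n) :
  U \is unitarymx -> dot (U *m a) (U *m b) = dot a b.
Proof.
move=> hU; rewrite /dot adjmx_mul -mulmxA (mulmxA (adjmx U)) unitary_adj //.
by rewrite mul1mx.
Qed.

Lemma proj_mul {C : numClosedFieldType} n (U : 'M[C]_n) (v : 'cV[C]_n) :
  proj (U *m v) = U *m proj v *m adjmx U.
Proof. by rewrite /proj adjmx_mul !mulmxA. Qed.

Lemma dot_deltar {C : numClosedFieldType} n (a : 'cV[C]_n) j :
  dot a (delta_mx j 0) = (a j 0)^*.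
Proof.
rewrite dotE (bigD1 j) //= big1 => [|l /negbTE hl]; rewrite mxE.
  by rewrite !eqxx mulr1 addr0.
by rewrite hl mulr0.
Qed.

Lemma dot_delta {C : numClosedFieldType} n (i j : 'I_n) :
  dot (delta_mx i 0) (delta_mx j 0) = (i == j)%:R :> C.
Proof. by rewrite dot_deltar mxE eqxx andbT eq_sym conjC_nat. Qed.

Lemma part3 {C : numClosedFieldType} (d k n : nat) (hd : (2 <= d)%N)
  (hnk : (n < k)%N) (e0 : 'cV[C]_d) (he0 : unit_vec e0) :
  ~ exists U : 'M[C]_(d ^ k),
        U \is unitarymx /\
        forall psi : 'cV[C]_d, unit_vec psi ->
          U *m tpow (proj psi) k *m adjmx U =
          castmx (expn_split d hnk, expn_split d hnk)
                 (kron (tpow (proj psi) n) (tpow (proj e0) (k - n))).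
Proof.
case=> U [hU H].
have key : forall psi, unit_vec psi ->
  proj (U *m vpow psi k) =
  proj (castmx (expn_split d hnk, erefl 1) (kron (vpow psi n) (vpow e0 (k - n)))).
  move=> psi hpsi; rewrite proj_cast -kron_proj -!tpow_proj -H //.
  by rewrite tpow_proj proj_mul.
have eq2 : forall psi chi : 'cV[C]_d, unit_vec psi -> unit_vec chi ->
   (dot psi chi * dot chi psi) ^+ k = (dot psi chi * dot chi psi) ^+ n.
  move=> psi chi hp hc.
  have E : \tr (proj (U *m vpow psi k) *m proj (U *m vpow chi k)) =
    \tr (proj (castmx (expn_split d hnk, erefl 1) (kron (vpow psi n) (vpow e0 (k - n)))) *m
         proj (castmx (expn_split d hnk, erefl 1) (kron (vpow chi n) (vpow e0 (k - n))))).
    by rewrite !key.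
  move: E; rewrite !tr_proj !dot_unitary // !dot_cast !dot_kron !dot_vpow.
  by rewrite -sqnorm_dot he0 expr1n !mulr1 !exprMn.
have i0lt : (0 < d)%N by apply: leq_trans hd.
pose b0 : 'cV[C]_d := delta_mx (Ordinal i0lt) 0.
pose b1 : 'cV[C]_d := delta_mx (Ordinal hd) 0.
have ne01 : (Ordinal i0lt == Ordinal hd) = false by [].
have ne10 : (Ordinal hd == Ordinal i0lt) = false by [].
have hb0 : unit_vec b0 by rewrite /unit_vec sqnorm_dot dot_delta eqxx.
have s2 : sqnorm (b0 + b1) = 2.
  by rewrite sqnorm_dot !dotDl !dotDr !dot_delta eqxx ne01 ne10 addr0 add0r.
have hchi : unit_vec (normalize (b0 + b1)).
  by apply: normalize_unit; rewrite s2 pnatr_eq0.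
have := eq2 _ _ hb0 hchi.
rewrite /normalize dotZr dotZl s2 !dotDr !dotDl !dot_delta eqxx ne01 addr0 mulr1.
have l0 : 0 <= (sqrtC (2 : C))^-1 by rewrite invr_ge0 sqrtC_ge0 ler0n.
rewrite geC0_conj // mulr1 -invfM -expr2 sqrtCK !exprVn => /invr_inj.
rewrite -!natrX => /eqP; rewrite eqr_nat eqn_exp2l // => /eqP E.
by move: (hnk); rewrite E ltnn.
Qed.



Lemma sqnorm0 {C : numClosedFieldType} n : sqnorm (0 : 'cV[C]_n) = 0.
Proof. by rewrite sqnorm_dot dotE big1 // => i _; rewrite mxE mulr0. Qed.

Lemma part1 {C : numClosedFieldType} (d k n : nat) (hd : (2 <= d)%N) (hn : (0 < n)%N)
  (alpha beta : C) (hab : `|alpha| ^+ 2 + `|beta| ^+ 2 = 1)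
  (hb : 0 < `|beta| < 1) (phi : 'cV[C]_d) (hphi : unit_vec phi) :
  ~ exists F : {linear 'M[C]_(d ^ k) -> 'M[C]_(d ^ n)},
        prob_qtrans F /\
        forall psi : 'cV[C]_d, unit_vec psi ->
          alpha *: psi + beta *: phi != 0 ->
          exists p : C, 0 < p /\
            F (tpow (proj psi) k) =
            p *: tpow (proj (normalize (alpha *: psi + beta *: phi))) n.
Proof.
case=> F [_ H].
have [u nz hu] := @kernel_exists _ _ _ (map_mx Num.conj phi) hd.
pose w := u^T.
have dpw : dot phi w = 0.
  have := congr1 (fun M : 'M[C]_1 => M 0 0) hu; rewrite !mxE => <-.
  by rewrite dotE; apply: eq_bigr => i _; rewrite !mxE mulrC.
have sw : sqnorm w != 0.
  apply/eqP => /sqnorm_eq0 h; move/eqP: nz; apply.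
  by rewrite -(trmxK u) -/w h trmx0.
pose psi := normalize w.
have hpsi : unit_vec psi by exact: normalize_unit.
have dpp : dot phi psi = 0 by rewrite /psi /normalize dotZr dpw mulr0.
have dpp' : dot psi phi = 0 by rewrite dotC dpp conjC0.
have p1 : dot psi psi = 1 by exact: hpsi.
have f1 : dot phi phi = 1 by exact: hphi.
clearbody psi.
have dd : forall a1 a2 : C, dot (a1 *: psi + beta *: phi) (a2 *: psi + beta *: phi)
                         = a1^* * a2 + beta^* * beta.
  move=> a1 a2; rewrite !dotDl !dotDr !dotZl !dotZr p1 f1 dpp dpp'.
  by rewrite !mulr0 !mulr1 addr0 add0r.
have sum1 : alpha^* * alpha + beta^* * beta = 1 by rewrite -!normCKC.
have s1 : sqnorm (alpha *: psi + beta *: phi) = 1 by rewrite sqnorm_dot dd.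
have s2 : sqnorm ((- alpha) *: psi + beta *: phi) = 1.
  by rewrite sqnorm_dot dd rmorphN mulrNN.
have nz1 : alpha *: psi + beta *: phi != 0.
  by apply/eqP => h; move: s1; rewrite h sqnorm0 => /eqP; rewrite eq_sym oner_eq0.
have nz2 : alpha *: (- psi) + beta *: phi != 0.
  rewrite scalerN -scaleNr.
  by apply/eqP => h; move: s2; rewrite h sqnorm0 => /eqP; rewrite eq_sym oner_eq0.
have hpsiN : unit_vec (- psi).
  by rewrite /unit_vec sqnorm_dot -scaleN1r dotZl dotZr p1 rmorphN rmorph1 mulr1 mulrNN mulr1.
have [q1 [q1pos E1]] := H psi hpsi nz1.
have [q2 [q2pos E2]] := H (- psi) hpsiN nz2.
rewrite normalize_id // in E1.
rewrite scalerN -scaleNr normalize_id // projN E1 in E2.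
rewrite !tpow_proj in E2.
set u1 := alpha *: psi + beta *: phi in E2 s1.
set u2 := (- alpha) *: psi + beta *: phi in E2 s2.
pose r := beta^* * beta - alpha^* * alpha.
have d12 : dot u1 u2 = r by rewrite /u1 /u2 dd mulrN addrC.
have d21 : dot u2 u1 = r by rewrite /u1 /u2 dd rmorphN mulNr addrC.
have T1 := congr1 (fun X => \tr (proj (vpow u1 n) *m X)) E2.
have T2 := congr1 (fun X => \tr (proj (vpow u2 n) *m X)) E2.
move: T1 T2; rewrite /= -!scalemxAr !mxtraceZ !tr_proj !dot_vpow d12 d21.
rewrite -!sqnorm_dot s1 s2 !expr1n !mulr1.
pose R := r ^+ n * r ^+ n.
move=> T1 T2; rewrite -/R in T1 T2.
have b0 : 0 < beta^* * beta by rewrite -normCKC exprn_gt0 //; case/andP: hb.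
have b1 : beta^* * beta < 1.
  by rewrite -normCKC exprn_ilt1 //; case/andP: hb => // h _; exact: ltW.
have rE : r ^+ 2 = 1 - 4 * (beta^* * beta) * (1 - beta^* * beta).
  rewrite /r; have -> : alpha^* * alpha = 1 - beta^* * beta by rewrite -sum1 addrK.
  by ring.
have rreal : r \is Num.real.
  rewrite /r rpredB //; apply: ger0_real; rewrite -normCKC; exact: exprn_ge0.
have r2ge0 : 0 <= r ^+ 2 by rewrite -real_normK // exprn_ge0.
have r2lt1 : r ^+ 2 < 1.
  suff : 0 < 1 - r ^+ 2 by rewrite subr_gt0.
  rewrite rE opprB addrC subrK.
  apply: mulr_gt0; last by rewrite subr_gt0.
  by apply: mulr_gt0 => //; rewrite ltr0n.
have RE : R = (r ^+ 2) ^+ n by rewrite /R -exprMn expr2.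
have R0 : 0 <= R by rewrite RE exprn_ge0.
have R1 : R < 1 by rewrite RE exprn_ilt1 // -lt0n.
have RR : R * R < 1 by exact: mulr_ilt1.
have : q1 = q1 * (R * R) by rewrite {1}T1 -T2 mulrA.
move/eqP; rewrite -subr_eq0 -{1}(mulr1 q1) -mulrBr mulf_eq0 => /orP [].
  by move/eqP => q0; move: q1pos; rewrite q0 ltxx.
by rewrite subr_eq0 => /eqP h; move: RR; rewrite -h ltxx.
Qed.



Definition psiv {C : numClosedFieldType} {d} (i0 i1 : 'I_d) (t : C) : 'cV[C]_d :=
  delta_mx i0 0 + t *: delta_mx i1 0.

Lemma psiv_entry {C : numClosedFieldType} d (i0 i1 : 'I_d) (t : C) x :
  psiv i0 i1 t x 0 = (x == i0)%:R + t * (x == i1)%:R.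
Proof. by rewrite !mxE !andbT. Qed.

Lemma psiv_mono {C : numClosedFieldType} d (i0 i1 : 'I_d) (h01 : i0 != i1) x :
  exists a : nat, exists e : bool, (a <= 1)%N /\
    forall t : C, psiv i0 i1 t x 0 = e%:R * t ^+ a.
Proof.
have [-> | n0] := eqVneq x i0.
  exists 0%N, true; split=> // t; rewrite psiv_entry eqxx (negbTE h01).
  by rewrite mulr0 addr0 expr0 mulr1.
have [-> | n1] := eqVneq x i1.
  exists 1%N, true; split=> // t; rewrite psiv_entry eqxx eq_sym (negbTE h01).
  by rewrite mulr1 add0r expr1 mul1r.
exists 0%N, false; split=> // t; rewrite psiv_entry (negbTE n0) (negbTE n1).
by rewrite mulr0 addr0 mul0r.
Qed.

Lemma vpow_mono {C : numClosedFieldType} d (i0 i1 : 'I_d) (h01 : i0 != i1) k (i : 'I_(d ^ k)) :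
  exists a : nat, exists e : bool, (a <= k)%N /\
    forall t : C, vpow (psiv i0 i1 t) k i 0 = e%:R * t ^+ a.
Proof.
elim: k i => [|k IH] i /=.
  by exists 0%N, true; split=> // t; rewrite mxE expr0 mulr1.
have [a1 [e1 [ha1 H1]]] := @psiv_mono C d i0 i1 h01 (split_idx (cast_ord (esym (esym (expnS d k))) i)).1.
have [a2 [e2 [ha2 H2]]] := IH (split_idx (cast_ord (esym (esym (expnS d k))) i)).2.
exists (a1 + a2)%N, (e1 && e2); split; first by rewrite -add1n leq_add.
move=> t; rewrite castmxE kron_col H1 H2.
by rewrite -mulnb natrM exprD mulrACA.
Qed.

Lemma vpow_idx {C : numClosedFieldType} d (i0 i1 : 'I_d) (h01 : i0 != i1) k a :
  (a <= k)%N -> exists i : 'I_(d ^ k),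
    forall t : C, vpow (psiv i0 i1 t) k i 0 = t ^+ a.
Proof.
elim: k a => [|k IH] a ha /=.
  by exists ord0; move=> t; move: ha; rewrite leqn0 => /eqP ->; rewrite mxE expr0.
case: a ha => [|a] ha.
  have [j Hj] := IH 0%N isT.
  exists (cast_ord (esym (expnS d k)) (mxvec_index i0 j)) => t.
  rewrite castmxE kron_col.
  have -> : cast_ord (esym (esym (expnS d k))) (cast_ord (esym (expnS d k)) (mxvec_index i0 j))
      = mxvec_index i0 j by apply: val_inj.
  rewrite split_mxvec /= Hj psiv_entry eqxx (negbTE h01) mulr0 addr0 mul1r.
  by rewrite !expr0.
have [j Hj] := IH a ha.
exists (cast_ord (esym (expnS d k)) (mxvec_index i1 j)) => t.
rewrite castmxE kron_col.
have -> : cast_ord (esym (esym (expnS d k))) (cast_ord (esym (expnS d k)) (mxvec_index i1 j))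
    = mxvec_index i1 j by apply: val_inj.
rewrite split_mxvec /= Hj psiv_entry eqxx eq_sym (negbTE h01) mulr1 add0r.
by rewrite exprS.
Qed.



Lemma part2 {C : numClosedFieldType} (d k n : nat) (hd : (2 <= d)%N) (hkn : (k < n)%N) :
  ~ exists F : {linear 'M[C]_(d ^ k) -> 'M[C]_(d ^ n)},
        prob_qtrans F /\
        forall psi : 'cV[C]_d, unit_vec psi ->
          exists p : C, 0 < p /\ F (tpow (proj psi) k) = p *: tpow (proj psi) n.
Proof.
case=> F [_ H].
have i0lt : (0 < d)%N by apply: leq_trans hd.
pose i0 : 'I_d := Ordinal i0lt.
pose i1 : 'I_d := Ordinal hd.
have h01 : i0 != i1 by [].
pose m := (k + k).+2.
pose A : 'M[C]_(m, (k + k).+1) := \matrix_(j, e) ((j : nat)%:R ^+ e).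
have [c cnz cA] := @kernel_exists C m (k + k).+1 A (ltnSn _).
pose t (j : 'I_m) : C := (j : nat)%:R.
pose G j := proj (vpow (psiv i0 i1 (t j)) k).
pose Hm j := proj (vpow (psiv i0 i1 (t j)) n).
have tc : forall j, (t j)^* = t j by move=> j; rewrite conjC_nat.
have Gsum : \sum_j c 0 j *: G j = 0.
  apply/matrixP => x y; rewrite summxE mxE.
  have [a1 [e1 [ha1 H1]]] := @vpow_mono C d i0 i1 h01 k x.
  have [a2 [e2 [ha2 H2]]] := @vpow_mono C d i0 i1 h01 k y.
  have hlt : (a1 + a2 < (k + k).+1)%N by rewrite ltnS leq_add.
  have := congr1 (fun M : 'rV[C]_((k + k).+1) => M 0 (Ordinal hlt)) cA.
  rewrite !mxE => Hs.
  rewrite (eq_bigr (fun j => e1%:R * e2%:R * (c 0 j * A j (Ordinal hlt)))).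
    by rewrite -mulr_sumr Hs mulr0.
  move=> j _; rewrite mxE /G projE H1 H2 /t rmorphM rmorphXn !rmorph_nat /A mxE /= exprD.
  by rewrite /t; ring.
have Hj : forall j, exists b : C, b != 0 /\ F (G j) = b *: Hm j.
  move=> j.
  have sj : sqnorm (psiv i0 i1 (t j)) = ((1 + j * j)%N)%:R.
    rewrite sqnorm_dot /psiv !dotDl !dotDr !dotZl !dotZr !dot_delta !eqxx.
    rewrite (negbTE h01) eq_sym (negbTE h01) tc /t.
    by rewrite natrD natrM /= mulr0 mulr1 addr0 add0r.
  have snz : sqnorm (psiv i0 i1 (t j)) != 0 by rewrite sj pnatr_eq0.
  have [p [ppos E]] := H _ (@normalize_unit C d _ snz).
  move: E; rewrite /normalize proj_scale !tpow_scale linearZ /= !tpow_proj -/(G j) -/(Hm j).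
  set mu := _ * _.
  have munz : mu != 0.
    rewrite /mu mulf_neq0 // ?conjC_eq0 invr_eq0 sqrtC_eq0 //.
  move=> E; exists ((mu ^+ k)^-1 * (p * mu ^+ n)); split.
    rewrite mulf_neq0 // ?invr_eq0 ?expf_neq0 // mulf_neq0 ?expf_neq0 //.
    by rewrite gt_eqF.
  by rewrite -scalerA -(scalerA p) -E scalerA mulVf ?scale1r // expf_neq0.
have [b Hb] := fin_all_exists Hj.
have Hsum : \sum_j (c 0 j * b j) *: Hm j = 0.
  transitivity (\sum_j F (c 0 j *: G j)); last by rewrite -linear_sum Gsum linear0.
  by apply: eq_bigr => j _; rewrite linearZ /= (proj2 (Hb j)) scalerA.
have mom : forall e, (e <= n + n)%N -> \sum_j (c 0 j * b j) * t j ^+ e = 0.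
  move=> e he.
  pose a1 := minn e n; pose a2 := (e - a1)%N.
  have ha1 : (a1 <= n)%N by rewrite geq_minr.
  have ha2 : (a2 <= n)%N by rewrite /a2 /a1; lia.
  have [x Hx] := @vpow_idx C d i0 i1 h01 n a1 ha1.
  have [y Hy] := @vpow_idx C d i0 i1 h01 n a2 ha2.
  have := congr1 (fun M : 'M[C]_(d ^ n) => M x y) Hsum.
  rewrite summxE mxE => E0; rewrite -[RHS]E0; apply: eq_bigr => j _.
  rewrite mxE /Hm projE Hx Hy /t rmorphXn rmorph_nat -exprD.
  have -> : (a1 + a2)%N = e by rewrite /a2 /a1; lia.
  by [].
pose tv : 'rV[C]_m := \row_j t j.
pose V := Vandermonde m tv.
pose bv : 'cV[C]_m := \col_j (c 0 j * b j).
have Vb : V *m bv = 0.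
  apply/matrixP => e z; rewrite !mxE.
  rewrite -[RHS](mom e); first by apply: eq_bigr => j _; rewrite !mxE mulrC.
  have := ltn_ord e; rewrite /m; lia.
have Vu : V \in unitmx.
  rewrite unitmxE unitfE det_Vandermonde.
  apply/prodf_neq0 => i _; apply/prodf_neq0 => j hij.
  by rewrite !mxE subr_eq0 /t eqr_nat eq_sym neq_ltn hij.
have bv0 : bv = 0 by rewrite -(mulKmx Vu bv) Vb mulmx0.
move/eqP: cnz; apply; apply/matrixP => z j; rewrite (ord1 z) mxE.
have := congr1 (fun M : 'cV[C]_m => M j 0) bv0; rewrite !mxE.
move/eqP; rewrite mulf_eq0 (negbTE (proj1 (Hb j))) orbF => /eqP //.
Qed.

Theorem theorem3 (C : numClosedFieldType) (d k n : nat)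
  (hd : (2 <= d)%N) (hk : (0 < k)%N) (hn : (0 < n)%N)
  (alpha beta : C) (hab : `|alpha| ^+ 2 + `|beta| ^+ 2 = 1) (hb : `|beta| != 1)
  (phi : 'cV[C]_d) (hphi : unit_vec phi) :
  [/\
   (* (i) *)
   (0 < `|beta| < 1 ->
    ~ exists F : {linear 'M[C]_(d ^ k) -> 'M[C]_(d ^ n)},
        prob_qtrans F /\
        forall psi : 'cV[C]_d, unit_vec psi ->
          alpha *: psi + beta *: phi != 0 ->
          exists p : C, 0 < p /\
            F (tpow (proj psi) k) =
            p *: tpow (proj (normalize (alpha *: psi + beta *: phi))) n),
   (* (ii) *)
   (beta = 0 -> (k < n)%N ->
    ~ exists F : {linear 'M[C]_(d ^ k) -> 'M[C]_(d ^ n)},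
        prob_qtrans F /\
        forall psi : 'cV[C]_d, unit_vec psi ->
          exists p : C, 0 < p /\ F (tpow (proj psi) k) = p *: tpow (proj psi) n)
  &
   (* (iii) *)
   (beta = 0 -> forall (hnk : (n < k)%N) (e0 : 'cV[C]_d), unit_vec e0 ->
    ~ exists U : 'M[C]_(d ^ k),
        U \is unitarymx /\
        forall psi : 'cV[C]_d, unit_vec psi ->
          U *m tpow (proj psi) k *m adjmx U =
          castmx (expn_split d hnk, expn_split d hnk)
                 (kron (tpow (proj psi) n) (tpow (proj e0) (k - n))))].
Proof.
split.
- by move=> hb0; exact: (@part1 C d k n hd hn alpha beta hab hb0 phi hphi).
- by move=> _ hkn; exact: (@part2 C d k n hd hkn).
- by move=> _ hnk e0 he0; exact: (@part3 C d k n hd hnk e0 he0).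
Qed.
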